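(* Let $n=2k+1$ with $k\ge 2$. Then $W=\{a_1,a_{k+1}\}$ is a local resolving set of $S_n$.
   Context: For $n\ge 3$, $S_n$ is the graph with vertex set $\{a_i,b_i,c_i,d_i : 1\le i\le n\}$ and edge set $\{a_ia_{i+1}, b_ib_{i+1}, c_ic_{i+1}, d_id_{i+1}, a_{i+1}b_i, a_ib_i, b_ic_i, c_id_i : 1\le i\le n\}$, indices taken modulo $n$. A vertex $w$ resolves $u,v$ if $d(u,w)\neq d(v,w)$ ($d$ the graph distance). A set $W$ is a local resolving set if every two adjacent vertices are resolved by some element of $W$. *)

(* Defs.v *)
From mathcomp Require Import all_boot.
Set Implicit Arguments. Unset Strict Implicit. Unset Printing Implicit Defensive.

Section Graph.
Variable T : finType.
Variable e : rel T.

Fixpoint walkn (m : nat) (u v : T) : bool :=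
  if m is m'.+1 then [exists w, e u w && walkn m' w v] else u == v.

(* graph distance: least m with a walk of length m from u to v;
   every shortest path has length < #|T|.  If no walk exists it is #|T|
   (irrelevant here since S_n is connected). *)
Definition gdist (u v : T) : nat := find (fun m => walkn m u v) (iota 0 #|T|).

Definition resolves (w u v : T) : bool := gdist u w != gdist v w.

Definition local_resolving (W : {set T}) : Prop :=
  forall u v : T, e u v -> exists2 w, w \in W & resolves w u v.
End Graph.

(* The graph S_n.  Vertex (l, i) with l : 'I_4 encodes
   l = 0 -> a_{i+1}, l = 1 -> b_{i+1}, l = 2 -> c_{i+1}, l = 3 -> d_{i+1},
   for i : 'I_n (so index i of the paper is i-1 here, modulo n). *)
Definition Svert (n : nat) := ('I_4 * 'I_n)%type.

Definition Sgen (n : nat) (x y : Svert n) : bool :=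
  let: (l, i) := x in let: (l', j) := y in
  (* a_i a_{i+1}, b_i b_{i+1}, c_i c_{i+1}, d_i d_{i+1} *)
  ((l == l') && (j %% n == (i + 1) %% n))
  (* a_{i+1} b_i *)
  || ((l == 0 :> nat) && (l' == 1 :> nat) && (i %% n == (j + 1) %% n))
  (* a_i b_i, b_i c_i, c_i d_i *)
  || ((l' == l.+1 :> nat) && (i == j :> nat)).

Definition Sadj (n : nat) : rel (Svert n) :=
  fun x y => (x != y) && (Sgen x y || Sgen y x).

Definition vA (n : nat) (i : 'I_n) : Svert n := (ord0, i).

(* Main.v *)
Require Import Defs.
From mathcomp Require Import all_boot zify.
Set Implicit Arguments. Unset Strict Implicit. Unset Printing Implicit Defensive.

Lemma find_iota_eq (P : pred nat) N a m : m < N -> P (a+m) ->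
  (forall j, j < m -> ~~ P (a+j)) -> find P (iota a N) = m.
Proof.
elim: N a m => [|N IH] a m //= hm hP hj.
case: m hm hP hj => [|m] hm hP hj; first by rewrite addn0 in hP; rewrite hP.
have := hj 0 isT; rewrite addn0 => /negbTE ->.
congr S; apply: IH => //.
  by rewrite addSnnS.
by move=> j hj'; rewrite addSnnS; apply: hj.
Qed.

Section G.
Variables (T : finType) (e : rel T) (w : T) (f : T -> nat).
Hypothesis f0 : forall x, f x = 0 <-> x = w.
Hypothesis flip : forall x y, e x y -> f x <= (f y).+1.
Hypothesis fdesc : forall x, 0 < f x -> exists y, e x y /\ f y = (f x).-1.
Hypothesis fbound : forall x, f x < #|T|.

Lemma walk_lb m x : walkn e m x w -> f x <= m.
Proof.
elim: m x => [|m IH] x /=; first by move/eqP => ->; rewrite (proj2 (f0 w)).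
case/existsP => y /andP [hxy hw]; have := IH _ hw; have := flip hxy; lia.
Qed.

Lemma walk_m m x : f x = m -> walkn e m x w.
Proof.
elim: m x => [|m IH] x hx /=.
  by apply/eqP; apply f0.
have [|y [hxy hy]] := fdesc (x:=x); first by rewrite hx.
apply/existsP; exists y; rewrite hxy /=; apply: IH; by rewrite hy hx.
Qed.

Lemma walk_f x : walkn e (f x) x w.
Proof. exact: walk_m. Qed.

Lemma gdist_f x : gdist e x w = f x.
Proof.
rewrite /gdist; apply: find_iota_eq => //; first by rewrite add0n walk_f.
move=> j hj; apply/negP; rewrite add0n => /walk_lb; lia.
Qed.
End G.

Definition sc n i := if i.+1 == n then 0 else i.+1.
Definition pr n i := if i == 0 then n.-1 else i.-1.
Definition cd n c i := minn ((i - c) + (c - i)) (n - ((i - c) + (c - i))).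
Definition F n c l i := if l == 0 then cd n c i else l + minn (cd n c i) (cd n c (sc n i)).

Lemma scP n i : i < n -> (sc n i = i.+1 /\ i.+1 < n) \/ (sc n i = 0 /\ i.+1 = n).
Proof. rewrite /sc; case: eqP; lia. Qed.
Lemma prP n i : i < n -> (pr n i = i.-1 /\ 0 < i) \/ (pr n i = n.-1 /\ i = 0).
Proof. rewrite /pr; case: eqP; lia. Qed.
Lemma cdP n c i : i < n -> c < n -> let x := cd n c i in
  (i = c + x /\ 2*x <= n) \/ (c = i + x /\ 2*x <= n) \/ (i + x = c + n /\ 2*x <= n) \/ (c + x = i + n /\ 2*x <= n).
Proof. move=> hi hc /=. rewrite /cd. lia. Qed.

Lemma cd_step n c i : i < n -> c < n ->
  cd n c (sc n i) <= (cd n c i).+1 /\ cd n c i <= (cd n c (sc n i)).+1.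
Proof.
move=> hi hc; have si : sc n i < n by have := scP hi; lia.
have := scP hi; have := cdP hi hc; have := cdP si hc; rewrite /=. lia. Qed.

Lemma cd_desc n c i : i < n -> c < n -> 0 < cd n c i ->
  cd n c (sc n i) = (cd n c i).-1 \/ cd n c (pr n i) = (cd n c i).-1.
Proof.
move=> hi hc; have si : sc n i < n by have := scP hi; lia.
have pi : pr n i < n by have := prP hi; lia.
have := scP hi; have := prP hi; have := cdP hi hc; have := cdP si hc; have := cdP pi hc; rewrite /=. lia. Qed.

Lemma sc_pr n i : i < n -> sc n (pr n i) = i.
Proof. move=> hi; have := prP hi; move=> [[-> ?]|[-> ->]]; rewrite /sc; case: eqP; lia. Qed.

Lemma cd0 n c i : i < n -> c < n -> cd n c i = 0 -> i = c.
Proof. move=> hi hc; have := cdP hi hc; rewrite /=; lia. Qed.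

Lemma cd_le n c i : i < n -> c < n -> 2 * cd n c i <= n.
Proof. move=> hi hc; have := cdP hi hc; rewrite /=; lia. Qed.

Definition gen n l i l' j :=
  ((l == l') && (j == sc n i)) || ((l == 0) && (l' == 1) && (i == sc n j)) || ((l' == l.+1) && (i == j)).

Lemma sc_lt n i : i < n -> sc n i < n.
Proof. by move=> hi; have := scP hi; lia. Qed.

Lemma F_lip n c (l i l' j : nat) : c < n -> i < n -> j < n ->
  gen n l i l' j -> F n c l i <= (F n c l' j).+1 /\ F n c l' j <= (F n c l i).+1.
Proof.
move=> hc hi hj hg.
have si := sc_lt hi; have sj := sc_lt hj.
have h1 := cd_step hi hc; have h2 := cd_step hj hc; have h3 := cd_step si hc.
move: hg; rewrite /gen /F.
case/orP => [/orP[]|] /andP[] => [/eqP e1 /eqP e2|/andP[/eqP e1 /eqP e2] /eqP e3|/eqP e1 /eqP e2]; subst;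
  case: eqP; try case: eqP; lia.
Qed.

Lemma cd0P k i : i < 2*k+1 -> (i <= k /\ cd (2*k+1) 0 i = i) \/ (k < i /\ cd (2*k+1) 0 i + i = 2*k+1).
Proof. move=> hi; have h0 : 0 < 2*k+1 by lia. have := cdP hi h0; rewrite /=; lia. Qed.
Lemma cdkP k i : i < 2*k+1 -> (i <= k /\ cd (2*k+1) k i + i = k) \/ (k <= i /\ i = k + cd (2*k+1) k i).
Proof. move=> hi; have hk : k < 2*k+1 by lia. have := cdP hi hk; rewrite /=; lia. Qed.

Lemma resolve_nat k (l i l' j : nat) : 2 <= k -> i < 2*k+1 -> j < 2*k+1 ->
  gen (2*k+1) l i l' j -> (F (2*k+1) 0 l i != F (2*k+1) 0 l' j) || (F (2*k+1) k l i != F (2*k+1) k l' j).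
Proof.
move=> hk hi hj hg.
rewrite -negb_and; apply/negP; case/andP => /eqP E1 /eqP E2.
have si := sc_lt hi; have sj := sc_lt hj. have ssi := sc_lt si.
move: hg E1 E2; rewrite /gen /F.
case/orP => [/orP[]|] /andP[] => [/eqP e1 /eqP e2|/andP[/eqP e1 /eqP e2] /eqP e3|/eqP e1 /eqP e2]; subst.
- have := scP hi; have := scP si.
  have := cd0P hi; have := cd0P si; have := cd0P ssi.
  have := cdkP hi; have := cdkP si; have := cdkP ssi.
  case: eqP => _. lia. lia.
- have := scP hj.
  have := cd0P hj; have := cd0P sj; have := cdkP hj; have := cdkP sj.
  rewrite /=. lia.
- have := scP hj.
  have := cd0P hj; have := cd0P sj; have := cdkP hj; have := cdkP sj.
  case: eqP => _; rewrite /=. lia. lia.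
Qed.

Lemma modS n i : i < n -> (i + 1) %% n = sc n i.
Proof.
move=> hi; rewrite /sc addn1; case: eqP => [->|h]; first by rewrite modnn.
by rewrite modn_small //; lia.
Qed.

Lemma Sgen_gen n (l l' : 'I_4) (i j : 'I_n) :
  Sgen (l, i) (l', j) = gen n l i l' j.
Proof.
rewrite /Sgen /gen !modS ?ltn_ord // !modn_small ?ltn_ord // -val_eqE.
Qed.

Lemma Sadj_gen n (x y : Svert n) : Sadj x y -> gen n x.1 x.2 y.1 y.2 \/ gen n y.1 y.2 x.1 x.2.
Proof.
case: x y => l i [l' j]; rewrite /Sadj => /andP[_ /orP[]]; rewrite !Sgen_gen; by [left|right].
Qed.

Lemma Sadj_of n (l l' : 'I_4) (i j : 'I_n) :
  ((l:nat) != l' \/ (i:nat) != j) -> gen n l i l' j || gen n l' j l i -> Sadj (l, i) (l', j).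
Proof.
move=> hne hg; rewrite /Sadj !Sgen_gen hg andbT.
apply/negP => /eqP [e1 e2]; subst; case: hne; by rewrite eqxx.
Qed.

Lemma sc_neq n i : 1 < n -> i < n -> sc n i != i.
Proof. move=> hn hi; apply/eqP => h; have := scP hi; lia. Qed.
Lemma pr_neq n i : 1 < n -> i < n -> pr n i != i.
Proof. move=> hn hi; apply/eqP => h; have := prP hi; lia. Qed.
Lemma pr_lt n i : i < n -> pr n i < n.
Proof. by move=> hi; have := prP hi; lia. Qed.

Definition fS n c (x : Svert n) := F n c x.1 x.2.

Lemma gdistS n (c : 'I_n) (x : Svert n) : 1 < n ->
  gdist (@Sadj n) x (ord0, c) = fS c x.
Proof.
move=> hn; apply: gdist_f.
- case=> l i; rewrite /fS /F /=; split.
    case: eqP => [hl|]; last lia.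
    move=> /cd0 h; have := h (ltn_ord i) (ltn_ord c) => {}h.
    by congr pair; apply: val_inj.
  by case=> -> ->; rewrite /= /cd subnn; lia.
- move=> x0 y /Sadj_gen [] h.
    have := F_lip (ltn_ord c) (ltn_ord x0.2) (ltn_ord y.2) h; rewrite /fS; by case.
  have := F_lip (ltn_ord c) (ltn_ord y.2) (ltn_ord x0.2) h; rewrite /fS; by case.
- case=> l i; rewrite /fS /=.
  have hi := ltn_ord i; have hc := ltn_ord c.
  case: l => [[|[|[|[|l]]]] hl] //= hF.
  + have := cd_desc hi hc; rewrite /F /= in hF * => /(_ hF) [h|h].
      exists ((ord0 : 'I_4), Ordinal (sc_lt hi)); split; last by rewrite /F /= h.
      apply: Sadj_of; first by right; rewrite eq_sym sc_neq.
      by rewrite /gen /= !eqxx.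
    exists ((ord0 : 'I_4), Ordinal (pr_lt hi)); split; last by rewrite /F /= h.
    apply: Sadj_of; first by right; rewrite eq_sym pr_neq.
    by rewrite /gen /= sc_pr // !eqxx orbT.
  + rewrite /F /=; case: (leqP (cd n c i) (cd n c (sc n i))) => hm.
      exists ((ord0 : 'I_4), i); split; last by rewrite /F /=; lia.
      apply: Sadj_of; first by left.
      by rewrite /gen /= !eqxx ?orbT.
    exists ((ord0 : 'I_4), Ordinal (sc_lt hi)); split; last by rewrite /F /=; lia.
    apply: Sadj_of; first by left.
    by rewrite /gen /= !eqxx ?orbT.
  + exists ((@Ordinal 4 1 isT), i); split; last by rewrite /F /=; lia.
    apply: Sadj_of; first by left.
    by rewrite /gen /= !eqxx ?orbT.
  + exists ((@Ordinal 4 2 isT), i); split; last by rewrite /F /=; lia.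
    apply: Sadj_of; first by left.
    by rewrite /gen /= !eqxx ?orbT.
- case=> l i; rewrite card_prod !card_ord /fS /F /=.
  have hi := ltn_ord i; have hc := ltn_ord c; have hl := ltn_ord l.
  have := cd_le hi hc; have := cd_le (sc_lt hi) hc.
  case: eqP; lia.
Qed.
Unset Implicit Arguments.

Theorem lemma3p5 (k : nat) (hk : 2 <= k)
    (i1 ik : 'I_(2 * k + 1)) (h1 : nat_of_ord i1 = 0) (hk1 : nat_of_ord ik = k) :
  local_resolving (@Sadj (2 * k + 1)) [set vA i1; vA ik].
Proof.
have hn : 1 < 2 * k + 1 by lia.
move=> u v huv.
have key : (F (2*k+1) 0 u.1 u.2 != F (2*k+1) 0 v.1 v.2) || (F (2*k+1) k u.1 u.2 != F (2*k+1) k v.1 v.2).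
  case: (Sadj_gen huv) => h.
    exact: resolve_nat hk (ltn_ord _) (ltn_ord _) h.
  by rewrite ![F _ _ u.1 _ == _]eq_sym; exact: resolve_nat hk (ltn_ord _) (ltn_ord _) h.
case/orP: key => hr.
  exists (vA i1); first by rewrite !inE eqxx.
  by rewrite /resolves /vA !gdistS // /fS h1.
exists (vA ik); first by rewrite !inE eqxx orbT.
by rewrite /resolves /vA !gdistS // /fS hk1.
Qed.
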